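(* Let $\alpha=(\alpha_1,\dots,\alpha_t)\in\mathcal{P}(n)$, let $\alpha^*=(\gamma_1,\dots,\gamma_s)$ be its conjugate (so $s=\alpha_1$), let $\delta(\alpha)=(d_k)_{k\ge1}$, and let $r=t+s-1$. Then \[s(\alpha)+s(\alpha^* )=2\sum_{k=1}^r k\,d_k.\] Consequently, if $\alpha,\beta\in\mathcal{P}(n)$ satisfy $\delta(\alpha)=\delta(\beta)$, then $s(\alpha)+s(\alpha^* )=s(\beta)+s(\beta^* )$.
   Context: A partition of a positive integer $n$ is a finite non-increasing sequence $\alpha=(\alpha_1,\dots,\alpha_t)$ of positive integers with sum $n$; $\mathcal{P}(n)$ is the set of partitions of $n$, and $\alpha_i=0$ for $i>t$. The diagonal sequence is $\delta(\alpha)=(d_k)_{k\ge1}$ with $d_k=|\{i:1\le i\le k,\ \alpha_i+i-1\ge k\}|$. The conjugate $\alpha^*$ has parts $\alpha^*_j=|\{i:\alpha_i\ge j\}|$. For a partition $\alpha=(\alpha_1,\dots,\alpha_t)$, $s(\alpha)=\sum_{i=1}^t\alpha_i^2$. *)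

(* Defs.v *)
From mathcomp Require Import all_boot.
Set Implicit Arguments. Unset Strict Implicit. Unset Printing Implicit Defensive.

(* A partition is a finite non-increasing sequence of positive integers;
   alpha_i (1-based) is [part a i] = nth 0 a (i-1), and 0 for i > size a. *)
Definition is_partition (n : nat) (a : seq nat) : Prop :=
  [/\ sorted geq a, all (fun x => 0 < x) a & sumn a = n].

Definition part (a : seq nat) (i : nat) : nat := nth 0 a i.-1.

Definition diag (a : seq nat) (k : nat) : nat :=
  #|[set i : 'I_k.+1 | (1 <= i) && (k <= part a i + i - 1)]|.

Definition conj_part (a : seq nat) : seq nat :=
  [seq count (fun x => j <= x) a | j <- iota 1 (part a 1)].

Definition sq_sum (a : seq nat) : nat := \sum_(x <- a) x ^ 2.

(* Main.v *)
Require Import Defs.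
From mathcomp Require Import all_boot zify.
Set Warnings "-notation-overridden".

Definition D (a : seq nat) (k : nat) : nat := \sum_(0 <= i < k) (k <= nth 0 a i + i).

Lemma diag_D a k : diag a k = D a k.
Proof.
rewrite /diag -sum1_card big_mkcond /= big_ord_recl /= in_set /=.
rewrite /D big_mkord; apply: eq_bigr => i _; rewrite in_set /= /part /bump /=.
by rewrite add1n /= addnS subn1 /=; case: (_ <= _).
Qed.

Lemma D_nil k : D [::] k = 0.
Proof. rewrite /D big_nat big1 // => i /andP[_ H]; rewrite nth_nil add0n; apply/eqP; rewrite eqb0 -ltnNge //. Qed.

Lemma D0 a : D a 0 = 0.
Proof. by rewrite /D big_geq. Qed.

Lemma DS x a k : D (x :: a) k.+1 = (k.+1 <= x) + D a k.
Proof.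
rewrite /D big_nat_recl // addn0; congr (_ + _); apply: eq_bigr => i _.
by rewrite /= addnS ltnS.
Qed.

Lemma sumA x M : \sum_(0 <= k < M) (k.+1 <= x) = minn x M.
Proof.
elim: M => [|M IH]; first by rewrite big_geq //; lia.
rewrite big_nat_recr //= IH; case: (ltnP M x) => H; lia.
Qed.

Lemma sumB x M : 2 * \sum_(0 <= k < M) k.+1 * (k.+1 <= x) = minn x M * (minn x M).+1.
Proof.
elim: M => [|M IH]; first by rewrite big_geq //; lia.
rewrite big_nat_recr //= mulnDr IH; case: (ltnP M x) => H /=.
  nia.
have -> : minn x M.+1 = x by lia.
nia.
Qed.

Lemma sumC s M : all (fun y => y <= M) s ->
  \sum_(0 <= j < M) count (fun y => j.+1 <= y) s = sumn s.
Proof.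
elim: s => [|y s IH] /=; first by rewrite big1.
case/andP => Hy Hs; rewrite big_split /= sumA IH //; lia.
Qed.

Lemma sorted_max s : sorted geq s -> all (fun y => y <= nth 0 s 0) s.
Proof.
case: s => [|x s] //= Hp; rewrite leqnn /=.
have := order_path_min _ Hp; apply => //.
by move=> a b c /= H1 H2; apply: leq_trans H2 H1.
Qed.

Lemma sqconj s M : all (fun y => y <= nth 0 s 0) s -> nth 0 s 0 <= M ->
  sq_sum (conj_part s) = \sum_(0 <= j < M) (count (fun y => j.+1 <= y) s) ^ 2.
Proof.
move=> Hall HM.
rewrite /sq_sum /conj_part big_map /part /=.
have -> : iota 1 (nth 0 s 0) = index_iota (0 + 1) (nth 0 s 0).+1 by rewrite /index_iota subn1.
rewrite big_addn subn1 /= [in RHS](big_cat_nat _ (n := nth 0 s 0)) //=.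
rewrite [X in _ = _ + X]big_nat_cond [X in _ = _ + X]big1 ?addn0.
  by apply: eq_bigr => i _; rewrite addn1.
move=> j /andP[/andP[Hj _] _].
have -> : count (fun y => j < y) s = 0.
  apply/eqP; rewrite eqn0Ngt -has_count; apply/hasPn => y Hy.
  move/allP: Hall => /(_ y Hy) Hy'; lia.
by [].
Qed.

Lemma mainL a : sorted geq a -> forall N, size a + nth 0 a 0 <= N ->
  \sum_(0 <= k < N) D a k = sumn a /\
  2 * \sum_(0 <= k < N) k * D a k = sq_sum a + sq_sum (conj_part a).
Proof.
elim: a => [|x a IH] Hs N HN.
  rewrite !big1 => [|k _|k _]; rewrite ?D_nil ?muln0 //; by rewrite /sq_sum /conj_part /= !big_nil.
have Hs' : sorted geq a := path_sorted Hs.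
have Hmax := @sorted_max (x :: a) Hs; rewrite /= leqnn /= in Hmax.
have Hmax' := @sorted_max a Hs'.
have Hhx : nth 0 a 0 <= x.
  case: a {IH Hs Hs' HN Hmax'} Hmax => //= y a /andP[] //.
case: N HN => [|M] HN; first by rewrite /= in HN; lia.
have HM : size a + nth 0 a 0 <= M by rewrite /= in HN; lia.
have [IH1 IH2] := IH Hs' M HM.
have Hax : all (fun y => y <= x) a := Hmax.
have HaM : all (fun y => y <= M) a.
  by apply/allP => y Hy; move/allP: Hax => /(_ y Hy); rewrite /= in HN; lia.
rewrite !big_nat_recl // D0 !add0n.
under eq_bigr => k _ do rewrite DS.
under [X in _ /\ 2 * X = _]eq_bigr => k _ do rewrite DS mulnDr.
rewrite big_split /= sumA IH1; split.
  by rewrite /= in HN |- *; lia.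
rewrite big_split /= mulnDr sumB.
under eq_bigr => k _ do rewrite mulSn.
rewrite big_split /= mulnDr IH2 IH1.
have -> : minn x M = x by rewrite /= in HN; lia.
rewrite (@sqconj (x :: a) x) /= ?leqnn ?Hax //.
rewrite (@sqconj a x) //.
have -> : sq_sum (x :: a) = x ^ 2 + sq_sum a by rewrite /sq_sum big_cons.
have -> : \sum_(0 <= j < x) ((j < x) + count (fun y => j < y) a) ^ 2
   = \sum_(0 <= j < x) (1 + 2 * count (fun y => j < y) a + count (fun y => j < y) a ^ 2).
  rewrite big_nat_cond [RHS]big_nat_cond; apply: eq_bigr => j /andP[/andP[_ ->] _].
  rewrite add1n sqrnD; nia.
rewrite !big_split /= !sum_nat_const_nat sumC // subn0.
nia.
Qed.


Theorem proposition2p9 :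
  (forall (n : nat) (a : seq nat), 0 < n -> is_partition n a ->
     sq_sum a + sq_sum (conj_part a)
     = 2 * \sum_(1 <= k < (size a + part a 1 - 1).+1) k * diag a k)
  /\
  (forall (n : nat) (a b : seq nat), 0 < n -> is_partition n a -> is_partition n b ->
     (forall k, 1 <= k -> diag a k = diag b k) ->
     sq_sum a + sq_sum (conj_part a) = sq_sum b + sq_sum (conj_part b)).
Proof.
split.
  move=> n a Hn [Hs _ Hsum].
  have Ha : 0 < size a by case: a Hs Hsum => // _ /= Hs0; rewrite -Hs0 in Hn.
  have -> : (size a + part a 1 - 1).+1 = size a + nth 0 a 0 by rewrite /part /=; lia.
  have [_ <-] := @mainL a Hs _ (leqnn (size a + nth 0 a 0)).
  rewrite (@big_ltn _ _ _ 0) ?mul0n ?add0n; last lia.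
  by congr (2 * _); apply: eq_bigr => k _; rewrite diag_D.
move=> n a b Hn [Ha _ _] [Hb _ _] Hd.
set N := size a + nth 0 a 0 + (size b + nth 0 b 0).
have [_ <-] := @mainL a Ha _ (leq_addr _ _ : _ <= N).
have [_ <-] := @mainL b Hb _ (leq_addl _ _ : _ <= N).
congr (2 * _); apply: eq_bigr => k _.
case: k => [|k]; first by rewrite !mul0n.
by rewrite -!diag_D Hd.
Qed.
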